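(* Let $R$ be a semiprimary ring of Loewy length $\ell$ with Jacobson radical $\mathscr{J}$. Then $R$ is rigid if and only if, for all $1\le i\le\ell$, $$\{x\in R\mid \mathscr{J}^{\ell-i}x=0\}=\mathscr{J}^i=\{x\in R\mid x\mathscr{J}^{\ell-i}=0\}.$$
   Context: A ring $R$ is semiprimary if its Jacobson radical $\mathscr{J}$ is nilpotent and $R/\mathscr{J}$ is semisimple; its Loewy length $\ell$ is the nilpotency index of $\mathscr{J}$, with $\mathscr{J}^0=R$. A finite-length module is rigid if it has exactly one Loewy filtration (a filtration with semisimple subquotients of minimal length); $R$ is rigid if both the left regular module ${}_RR$ and the right regular module $R_R$ are rigid. *)

(* Defs.v *)
(* General (possibly noncommutative, possibly infinite) rings
   with 1 <> 0 are modelled by [nzRingType]; subsets of R by predicates R -> Prop. *)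
From HB Require Import structures.
From mathcomp Require Import all_boot all_algebra.
Set Implicit Arguments. Unset Strict Implicit. Unset Printing Implicit Defensive.
Import GRing.Theory.
Local Open Scope ring_scope.

Section RingDefs.
Variable R : nzRingType.

Definition sub_set (A B : R -> Prop) := forall x, A x -> B x.
Definition set_eq (A B : R -> Prop) := forall x, A x <-> B x.
Definition zero_set : R -> Prop := fun x => x = 0.
Definition full_set : R -> Prop := fun _ => True.
Definition set_add (A B : R -> Prop) : R -> Prop :=
  fun x => exists a b, [/\ A a, B b & x = a + b].
Definition set_cap (A B : R -> Prop) : R -> Prop := fun x => A x /\ B x.

(* submodules of the left regular module _R R *)
Definition left_ideal (I : R -> Prop) :=
  [/\ I 0, (forall x y, I x -> I y -> I (x + y)) & (forall r x, I x -> I (r * x))].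

(* the subquotient N/L (L <= N submodules of _R R) is a semisimple module:
   every submodule K/L of N/L is a direct summand *)
Definition semisimple_subquot (L N : R -> Prop) :=
  forall K, left_ideal K -> sub_set L K -> sub_set K N ->
    exists K', [/\ left_ideal K', sub_set L K', sub_set K' N,
                   set_eq (set_add K K') N & set_eq (set_cap K K') L].

Definition left_ss_filtration (n : nat) (F : nat -> R -> Prop) :=
  [/\ set_eq (F 0%N) zero_set, set_eq (F n) full_set,
      (forall k, (k <= n)%N -> left_ideal (F k)) &
      (forall k, (k < n)%N -> sub_set (F k) (F k.+1) /\
                               semisimple_subquot (F k) (F k.+1))].

Definition left_loewy_filtration (n : nat) (F : nat -> R -> Prop) :=
  left_ss_filtration n F /\ (forall m G, left_ss_filtration m G -> (n <= m)%N).

Definition left_regular_rigid :=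
  (exists n F, left_loewy_filtration n F) /\
  (forall n F m G, left_loewy_filtration n F -> left_loewy_filtration m G ->
     n = m /\ forall k, (k <= n)%N -> set_eq (F k) (G k)).

Definition maximal_left_ideal (M : R -> Prop) :=
  [/\ left_ideal M, ~ M 1 &
      forall I, left_ideal I -> sub_set M I -> ~ I 1 -> set_eq I M].
Definition jacobson : R -> Prop := fun x => forall M, maximal_left_ideal M -> M x.

Definition set_mul (A B : R -> Prop) : R -> Prop :=
  fun x => exists s : seq (R * R),
    (forall p, p \in s -> A p.1 /\ B p.2) /\ x = \sum_(p <- s) p.1 * p.2.
Fixpoint set_pow (A : R -> Prop) (n : nat) : R -> Prop :=
  match n with 0%N => full_set | n'.+1 => set_mul (set_pow A n') A end.

Definition semiprimary :=
  (exists n, set_eq (set_pow jacobson n) zero_set) /\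
  semisimple_subquot jacobson full_set.

(* Loewy length = nilpotency index of J *)
Definition loewy_length (l : nat) :=
  set_eq (set_pow jacobson l) zero_set /\
  (forall k, (k < l)%N -> ~ set_eq (set_pow jacobson k) zero_set).

End RingDefs.

(* R is rigid: both _R R and R_R (= the left regular module of the
   converse ring R^c) are rigid *)
Definition rigid (R : nzRingType) :=
  left_regular_rigid R /\ left_regular_rigid (R^c)%type.

(* Main.v *)
Require Import Defs.
From HB Require Import structures.
From mathcomp Require Import all_boot all_algebra.
From mathcomp Require Import boolp classical_sets.
From Stdlib Require Import Setoid Morphisms.
Import GRing.Theory.
Local Open Scope ring_scope.
Set Implicit Arguments. Unset Strict Implicit.

Section Basic.
Variable T : nzRingType.
Implicit Types A B C Z : T -> Prop.

Lemma set_mul_min A B Z : Z 0 -> (forall x y, Z x -> Z y -> Z (x + y)) ->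
  (forall a b, A a -> B b -> Z (a * b)) -> forall x, set_mul A B x -> Z x.
Proof.
move=> Z0 ZD Zab x [s [Hs ->]].
elim: s Hs => [|p s IH] Hs; first by rewrite big_nil.
rewrite big_cons; apply: ZD.
  have /Hs[] : p \in p :: s by rewrite inE eqxx.
  by apply: Zab.
by apply: IH => q qs; apply: Hs; rewrite inE qs orbT.
Qed.

Lemma set_mul0 A B : set_mul A B 0.
Proof. by exists [::]; split => //; rewrite big_nil. Qed.

Lemma set_mulD A B x y : set_mul A B x -> set_mul A B y -> set_mul A B (x + y).
Proof.
move=> [s1 [H1 ->]] [s2 [H2 ->]]; exists (s1 ++ s2); split; last by rewrite big_cat.
by move=> p; rewrite mem_cat => /orP[]; auto.
Qed.

Lemma set_mul1 A B a b : A a -> B b -> set_mul A B (a * b).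
Proof.
by move=> Aa Bb; exists [:: (a, b)]; split; [move=> p; rewrite inE => /eqP -> | rewrite big_seq1].
Qed.

Lemma set_mul_mono A A' B B' : sub_set A A' -> sub_set B B' ->
  sub_set (set_mul A B) (set_mul A' B').
Proof.
move=> hA hB; apply: set_mul_min; [exact: set_mul0 | exact: set_mulD |].
by move=> a b Aa Bb; apply: set_mul1; auto.
Qed.

Lemma set_mulA A B C : sub_set (set_mul (set_mul A B) C) (set_mul A (set_mul B C)).
Proof.
apply: set_mul_min; [exact: set_mul0 | exact: set_mulD |].
move=> u c; move: u; apply: set_mul_min.
- by move=> _; rewrite mul0r; exact: set_mul0.
- by move=> x y hx hy Cc; rewrite mulrDl; apply: set_mulD; auto.
- by move=> a b Aa Bb Cc; rewrite -mulrA; apply: set_mul1 => //; exact: set_mul1.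
Qed.

Lemma set_mulA' A B C : sub_set (set_mul A (set_mul B C)) (set_mul (set_mul A B) C).
Proof.
apply: set_mul_min; [exact: set_mul0 | exact: set_mulD |].
move=> a u Aa; move: u; apply: set_mul_min.
- by rewrite mulr0; exact: set_mul0.
- by move=> x y hx hy; rewrite mulrDr; apply: set_mulD; auto.
- by move=> b c Bb Cc; rewrite mulrA; apply: set_mul1 => //; exact: set_mul1.
Qed.

Lemma set_mul_left A B : left_ideal A -> left_ideal (set_mul A B).
Proof.
case=> A0 AD AM; split; [exact: set_mul0 | exact: set_mulD |].
move=> r; apply: set_mul_min.
- by rewrite mulr0; exact: set_mul0.
- by move=> x y hx hy; rewrite mulrDr; apply: set_mulD.
- by move=> a b Aa Bb; rewrite mulrA; apply: set_mul1; auto.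
Qed.

Lemma full_left : left_ideal (@full_set T).
Proof. by []. Qed.

Lemma li_opp (I : T -> Prop) x : left_ideal I -> I x -> I (- x).
Proof. by case=> _ _ IM Ix; rewrite -mulN1r; apply: IM. Qed.

Lemma li_sub (I : T -> Prop) x y : left_ideal I -> I x -> I y -> I (x - y).
Proof. move=> hI Ix Iy; case: (hI) => _ ID _; apply: ID => //; exact: li_opp. Qed.

Lemma set_add_left A B : left_ideal A -> left_ideal B -> left_ideal (set_add A B).
Proof.
case=> A0 AD AM [B0 BD BM]; split.
- by exists 0, 0; rewrite addr0.
- move=> x y [a [b [Aa Bb ->]]] [a' [b' [Aa' Bb' ->]]].
  by exists (a + a'), (b + b'); split; auto; rewrite addrACA.
- move=> r x [a [b [Aa Bb ->]]]; exists (r * a), (r * b); split; auto.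
  by rewrite mulrDr.
Qed.

End Basic.
Lemma zorn_ne (T : Type) (P : (T -> Prop) -> Prop) (X0 : T -> Prop) :
  P X0 ->
  (forall F : (T -> Prop) -> Prop, (forall X, F X -> P X) ->
     (forall X Y, F X -> F Y -> (forall x, X x -> Y x) \/ (forall x, Y x -> X x)) ->
     (exists X, F X) -> P (fun x => exists X, F X /\ X x)) ->
  exists A, P A /\ forall B, P B -> (forall x, A x -> B x) -> forall x, B x -> A x.
Proof.
move=> PX0 Hch.
pose P' := fun X : T -> Prop => P X \/ (forall x, ~ X x).
have [|A [P'A Amax]] := @Zorn_bigcup T P'.
  move=> F FP Ftot.
  have [[X [FX PX]]|nF] := pselect (exists X, F X /\ P X).
    left.
    have -> : (bigcup F (fun X => X)) = (fun x => exists X, (fun Y => F Y /\ P Y) X /\ X x).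
      apply/funext => x; apply/propext; split.
        case=> Y FY Yx; exists Y; split=> //; split=> //.
        case: (FP _ FY) => // hY; by case: (hY x).
      by case=> Y [[FY _] Yx]; exists Y.
    apply: Hch.
    - by move=> Y [].
    - move=> Y Z [FY _] [FZ _]; case: (Ftot _ _ FY FZ) => h; [left|right]; exact: h.
    - by exists X.
  right => x [Y FY Yx].
  case: (FP _ FY) => [PY|hY]; last exact: (hY x).
  by apply: nF; exists Y.
have [PA|A0] := P'A.
  exists A; split=> // B PB AB x Bx.
  apply: contrapT => nAx; apply: (Amax B _ (or_introl PB)).
  split=> // BA; exact: nAx (BA _ Bx).
exists X0; split=> // B PB _ x Bx; exfalso.
apply: (Amax B _ (or_introl PB)); split; first by move=> y /A0.
by move=> /(_ x Bx) /A0.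
Qed.

Section Gen.
Variable T : nzRingType.
Variable J : T -> Prop.
Hypothesis JL : left_ideal J.
Hypothesis JR : forall x r, J x -> J (x * r).
Hypothesis Jinv : forall j, J j -> exists u, u * (1 - j) = 1.
Hypothesis Jss : semisimple_subquot J (@full_set T).

Lemma pow_left m : left_ideal (set_pow J m).
Proof. elim: m => [|m IH] /=; [exact: full_left | exact: set_mul_left]. Qed.

Lemma pow0 m : set_pow J m 0.
Proof. by case: (pow_left m). Qed.

Lemma powD m x y : set_pow J m x -> set_pow J m y -> set_pow J m (x + y).
Proof. by case: (pow_left m) => _ h _; apply: h. Qed.

Lemma powM m r x : set_pow J m x -> set_pow J m (r * x).
Proof. by case: (pow_left m) => _ _ h; apply: h. Qed.

Lemma pow_right m x r : set_pow J m x -> set_pow J m (x * r).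
Proof.
case: m => [//|m] /=; move: x; apply: set_mul_min.
- by rewrite mul0r; exact: set_mul0.
- by move=> x y hx hy; rewrite mulrDl; exact: set_mulD.
- by move=> a b ha hb; rewrite -mulrA; apply: set_mul1 => //; exact: JR.
Qed.

Lemma mulJpow m j y : J j -> set_pow J m y -> set_pow J m.+1 (j * y).
Proof.
move=> Jj; elim: m y => [|m IH] y /=.
  by move=> _; rewrite -[j * y]mul1r; apply: set_mul1 => //; exact: JR.
move: y; apply: set_mul_min.
- by rewrite mulr0; exact: set_mul0.
- by move=> x y hx hy; rewrite mulrDr; exact: set_mulD.
- by move=> a b ha hb; rewrite mulrA; apply: set_mul1 => //; exact: IH.
Qed.

Lemma pow_mono m : sub_set (set_pow J m.+1) (set_pow J m).
Proof.
apply: set_mul_min; [exact: pow0 | exact: powD |].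
by move=> a b ha _; exact: pow_right.
Qed.

Lemma ss_killed (L N : T -> Prop) : left_ideal L -> left_ideal N -> sub_set L N ->
  semisimple_subquot L N -> forall j x, J j -> N x -> L (j * x).
Proof.
move=> hL hN LN hss j x Jj Nx.
pose K := fun y => exists l j', [/\ L l, J j' & y = l + j' * x].
have hK : left_ideal K.
  case: hL => L0 LD LM; case: JL => J0 JD JM; split.
  - by exists 0, 0; split=> //; rewrite mul0r addr0.
  - move=> y z [l1 [j1 [? ? ->]]] [l2 [j2 [? ? ->]]].
    by exists (l1 + l2), (j1 + j2); split; auto; rewrite mulrDl addrACA.
  - move=> r y [l1 [j1 [? ? ->]]]; exists (r * l1), (r * j1); split; auto.
    by rewrite mulrDr mulrA.
have LK : sub_set L K.
  by move=> y Ly; exists y, 0; split=> //; [case: JL | rewrite mul0r addr0].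
have KN : sub_set K N.
  case: hN => _ ND NM; move=> y [l1 [j1 [Ll Jj' ->]]]; apply: ND; auto.
have [K' [hK' LK' K'N hadd hcap]] := hss K hK LK KN.
have [k [k' [[l1 [j1 [Ll1 Jj1 ->]]] Kk' Hx]]] := (proj2 (hadd x) Nx).
have [u Hu] := Jinv Jj1.
have K'x : K' x.
  have e : x = u * ((1 - j1) * x).
    by rewrite mulrA Hu mul1r.
  rewrite e; case: hK' => _ K'D K'M; apply: K'M.
  have -> : (1 - j1) * x = l1 + k'.
    by rewrite mulrBl mul1r {1}Hx addrAC addrK.
  by apply: K'D => //; exact: LK'.
apply/(hcap (j * x)); split.
  by exists 0, j; rewrite add0r; split=> //; case: hL.
by case: hK' => _ _ K'M; apply: K'M.
Qed.

Lemma killed_ss (L N : T -> Prop) : left_ideal L -> left_ideal N -> sub_set L N ->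
  (forall j x, J j -> N x -> L (j * x)) -> semisimple_subquot L N.
Proof.
move=> hL hN LN kill K hK LK KN.
pose P := fun K' : T -> Prop => [/\ left_ideal K', sub_set L K', sub_set K' N &
                                  forall y, K y -> K' y -> L y].
have [|F FP Ftot [X FX]|A [[hA LA AN capA] Amax]] := @zorn_ne T P L.
- by split=> //; move=> y _.
- have hU : left_ideal (fun x => exists X, F X /\ X x).
    split.
    + by exists X; split => //; case: (FP _ FX) => [[]].
    + move=> x y [X1 [F1 x1]] [X2 [F2 y2]].
      case: (Ftot _ _ F1 F2) => h.
      * exists X2; split => //; case: (FP _ F2) => [[_ D _]] _ _ _; apply: D; auto.
      * exists X1; split => //; case: (FP _ F1) => [[_ D _]] _ _ _; apply: D; auto.
    + move=> r x [X1 [F1 x1]]; exists X1; split=> //.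
      by case: (FP _ F1) => [[_ _ M]] _ _ _; apply: M.
  split=> //.
  + by move=> y Ly; exists X; split=> //; case: (FP _ FX) => _ h _ _; apply: h.
  + by move=> y [X1 [F1 y1]]; case: (FP _ F1) => _ _ h _; apply: h.
  + by move=> y Ky [X1 [F1 y1]]; case: (FP _ F1) => _ _ _ h; apply: h.
have hP := set_add_left hK hA.
have main : forall x, N x -> set_add K A x.
  move=> x Nx.
  pose As := fun r => set_add K A (r * x).
  have hAs : left_ideal As.
    case: hP => P0 PD PM; split.
    - by rewrite /As mul0r.
    - by move=> r s hr hs; rewrite /As mulrDl; apply: PD.
    - by move=> r s hs; rewrite /As -mulrA; apply: PM.
  have JAs : sub_set J As.
    move=> j Jj; exists (j * x), 0; split; last by rewrite addr0.
      by apply: LK; apply: kill.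
    by case: hA.
  have [B [hB JB _ Badd Bcap]] := Jss hAs JAs (fun _ _ => I).
  have [a [b [Aa Bb e1]]] := proj2 (Badd 1) I.
  pose K'' := fun y => exists k' c, [/\ A k', B c & y = k' + c * x].
  have PK'' : P K''.
    split.
    - case: hA => A0 AD AM; case: hB => B0 BD BM; split.
      + by exists 0, 0; split=> //; rewrite mul0r addr0.
      + move=> y z [k1 [c1 [? ? ->]]] [k2 [c2 [? ? ->]]].
        by exists (k1 + k2), (c1 + c2); split; auto; rewrite mulrDl addrACA.
      + move=> r y [k1 [c1 [? ? ->]]]; exists (r * k1), (r * c1); split; auto.
        by rewrite mulrDr mulrA.
    - by move=> y Ly; exists y, 0; split; [exact: LA | case: hB | rewrite mul0r addr0].
    - move=> y [k1 [c1 [Ak Bc ->]]]; case: hN => _ ND NM; apply: ND; auto.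
    - move=> y Ky [k1 [c1 [Ak Bc ey]]].
      have Asc : As c1.
        exists y, (- k1); split => //; first exact: li_opp.
        by rewrite ey addrAC subrr add0r.
      have Jc : J c1 by apply/(Bcap c1); split.
      apply: capA => //; rewrite ey; case: hA => _ AD _; apply: AD => //.
      by apply: LA; apply: kill.
  have AK'' : forall y, A y -> K'' y.
    by move=> y Ay; exists y, 0; split=> //; [case: hB | rewrite mul0r addr0].
  have Abx : A (b * x) by apply: (Amax _ PK'' AK''); exists 0, b; rewrite add0r; split=> //; case: hA.
  have [k1 [a1 [Kk1 Aa1 e2]]] : set_add K A (a * x) by [].
  exists k1, (a1 + b * x); split=> //; first by case: hA => _ AD _; apply: AD.
  by rewrite addrA -e2 -mulrDl -e1 mul1r.
exists A; split=> //.
- move=> x; split; last exact: main.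
  move=> [k [a [Kk Aa ->]]]; case: hN => _ ND _; apply: ND; auto.
- move=> x; split; first by case=> Kx Ax; apply: capA.
  by move=> Lx; split; auto.
Qed.

Variable l : nat.
Hypothesis Jnil : set_eq (set_pow J l) (@zero_set T).
Hypothesis Jmin : forall k, (k < l)%N -> ~ set_eq (set_pow J k) (@zero_set T).

Definition Gs k := set_pow J (l - k).
Definition Ss k := fun x : T => forall y, set_pow J k y -> y * x = 0.

Lemma Gs_filt : left_ss_filtration l Gs.
Proof.
split.
- by rewrite /Gs subn0.
- by rewrite /Gs subnn.
- by move=> k _; exact: pow_left.
- move=> k lt_kl; rewrite /Gs.
  have -> : (l - k = (l - k.+1).+1)%N by rewrite subnSK.
  split; first exact: pow_mono.
  apply: killed_ss; [exact: pow_left | exact: pow_left | exact: pow_mono |].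
  by move=> j x Jj hx; exact: mulJpow.
Qed.

Lemma Ss_left k : left_ideal (Ss k).
Proof.
split.
- by move=> y _; rewrite mulr0.
- by move=> x z hx hz y hy; rewrite mulrDr hx // hz // addr0.
- by move=> r x hx y hy; rewrite mulrA; apply: hx; exact: pow_right.
Qed.

Lemma Ss_mono k : sub_set (Ss k) (Ss k.+1).
Proof. by move=> x hx y hy; apply: hx; exact: pow_mono. Qed.

Lemma Ss_filt : left_ss_filtration l Ss.
Proof.
split.
- move=> x; split; last by move=> -> y _; rewrite mulr0.
  by move=> hx; rewrite /zero_set -[x]mul1r; apply: hx.
- move=> x; split=> // _ y /Jnil ->; by rewrite mul0r.
- by move=> k _; exact: Ss_left.
- move=> k lt_kl; split; first exact: Ss_mono.
  apply: killed_ss; [exact: Ss_left | exact: Ss_left | exact: Ss_mono |].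
  move=> j x Jj hx y hy; rewrite mulrA; apply: hx.
  exact: set_mul1.
Qed.

Lemma filt_bounds n (F : nat -> T -> Prop) : left_ss_filtration n F -> forall k, (k <= n)%N ->
  sub_set (set_pow J (n - k)) (F k) /\ sub_set (F k) (Ss k).
Proof.
case=> F0 Fn Fl Fs.
have kill : forall k j x, (k < n)%N -> J j -> F k.+1 x -> F k (j * x).
  move=> k j x lt_kn; case: (Fs k lt_kn) => sub ss.
  exact: (ss_killed (Fl k (ltnW lt_kn)) (Fl k.+1 lt_kn) sub ss).
have Q : forall m k a x, (m <= k)%N -> (k <= n)%N -> set_pow J m a -> F k x ->
    F (k - m)%N (a * x).
  elim=> [|m IH] k a x le_mk le_kn ha hx.
    by rewrite subn0; case: (Fl k le_kn) => _ _ M; apply: M.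
  move: a ha; apply: set_mul_min.
  - by rewrite mul0r; case: (Fl (k - m.+1)%N (leq_trans (leq_subr _ _) le_kn)).
  - move=> a b ha hb; rewrite mulrDl.
    by case: (Fl (k - m.+1)%N (leq_trans (leq_subr _ _) le_kn)) => _ D _; apply: D.
  - move=> a b ha Jb; rewrite -mulrA.
    have k0 : (0 < k)%N by apply: leq_trans le_mk.
    have e : k = k.-1.+1 by rewrite prednK.
    have hbx : F k.-1 (b * x).
      apply: kill => //; first by rewrite -e.
      by rewrite -e.
    have := IH k.-1 a (b * x); rewrite -subSS -e; apply => //.
    + by rewrite -ltnS -e.
    + by apply: leq_trans le_kn; exact: leq_pred.
move=> k le_kn; split.
  move=> a ha; rewrite -[a]mulr1.
  have := Q (n - k)%N n a 1 (leq_subr _ _) (leqnn _) ha.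
  rewrite subKn //; apply; exact/(Fn 1).
move=> x hx y hy; apply/(F0 (y * x)).
by have := Q k k y x (leqnn _) le_kn hy hx; rewrite subnn.
Qed.

Lemma filt_len n (F : nat -> T -> Prop) : left_ss_filtration n F -> (l <= n)%N.
Proof.
move=> hF; rewrite leqNgt; apply/negP => lt_nl; apply: (Jmin lt_nl) => x; split.
  move=> hx; case: (hF) => F0 _ _ _; apply/F0.
  have [h _] := filt_bounds hF (leq0n n); apply: h; by rewrite subn0.
by move=> ->; exact: pow0.
Qed.

Lemma Gs_loewy : left_loewy_filtration l Gs.
Proof. by split; [exact: Gs_filt | move=> m G; exact: filt_len]. Qed.

Lemma Ss_loewy : left_loewy_filtration l Ss.
Proof. by split; [exact: Ss_filt | move=> m G; exact: filt_len]. Qed.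

Lemma gen_main : left_regular_rigid T <->
  forall i : nat, (1 <= i <= l)%N ->
    set_eq (fun x : T => forall y, set_pow J (l - i) y -> y * x = 0) (set_pow J i).
Proof.
split.
  case=> _ uniq i /andP[i1 il].
  have [_ h] := uniq _ _ _ _ Gs_loewy Ss_loewy.
  have := h (l - i)%N (leq_subr _ _); rewrite /Gs /Ss subKn // => e x.
  by split => hx; apply/(e x).
move=> cond.
have key : forall n (F : nat -> T -> Prop), left_loewy_filtration n F -> n = l /\
    forall k, (k <= n)%N -> set_eq (F k) (set_pow J (l - k)).
  move=> n F [hF minF].
  have en : n = l by apply/eqP; rewrite eqn_leq (minF _ _ Gs_filt) (filt_len hF).
  split=> // k le_kn x; have [b1 b2] := filt_bounds hF le_kn; subst n.
  split; last exact: b1.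
  move=> Fx; have := b2 x Fx.
  case: (ltnP k l) => [lt_kl|ge_kl] Sx.
    have i1 : (1 <= l - k <= l)%N by rewrite subn_gt0 lt_kl leq_subr.
    apply/(cond _ i1 x); by rewrite subKn // ltnW.
  by have -> : (l - k = 0)%N by apply/eqP; rewrite subn_eq0.
split; first by exists l, Gs; exact: Gs_loewy.
move=> n F m G hF hG.
have [en eF] := key _ _ hF; have [em eG] := key _ _ hG.
split; first by rewrite en em.
move=> k le_kn x; rewrite eF // eG; first by [].
by rewrite em -en.
Qed.

End Gen.

Section RSS.
Variable T : nzRingType.
Variable J : T -> Prop.
Hypothesis JL : left_ideal J.
Hypothesis JR : forall x r, J x -> J (x * r).
Hypothesis Jss : semisimple_subquot J (@full_set T).

Definition eqJ (a b : T) := J (a - b).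

Lemma J0 : J 0. Proof. by case: JL. Qed.
Lemma JD x y : J x -> J y -> J (x + y). Proof. by case: JL => _ h _; apply: h. Qed.
Lemma JM r x : J x -> J (r * x). Proof. by case: JL => _ _ h; apply: h. Qed.
Lemma JN x : J x -> J (- x). Proof. exact: li_opp. Qed.

Instance eqJ_equiv : Equivalence eqJ.
Proof.
split.
- by move=> a; rewrite /eqJ subrr; exact: J0.
- by move=> a b h; rewrite /eqJ -opprB; exact: JN.
- move=> a b c h1 h2; rewrite /eqJ -[a](subrK b) -addrA; exact: JD.
Qed.

Instance eqJ_add : Proper (eqJ ==> eqJ ==> eqJ) (@GRing.add T).
Proof. by move=> a b h c d h'; rewrite /eqJ opprD addrACA; exact: JD. Qed.

Instance eqJ_opp : Proper (eqJ ==> eqJ) (@GRing.opp T).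
Proof. by move=> a b h; rewrite /eqJ -opprD; exact: JN. Qed.

Instance eqJ_mul : Proper (eqJ ==> eqJ ==> eqJ) (@GRing.mul T).
Proof.
move=> a b h c d h'; rewrite /eqJ.
have -> : a * c - b * d = (a - b) * c + b * (c - d).
  by rewrite mulrBl mulrBr addrA subrK.
by apply: JD; [exact: JR | exact: JM].
Qed.

Lemma eqJ_refl x : eqJ x x. Proof. reflexivity. Qed.
#[local] Hint Resolve eqJ_refl : core.

Lemma eqJ0 x : J x <-> eqJ x 0.
Proof. by rewrite /eqJ subr0. Qed.

Lemma left_gen (A : T -> Prop) : left_ideal A -> sub_set J A ->
  exists e, A e /\ forall a, A a -> eqJ a (a * e).
Proof.
move=> hA JA; have [B [hB JB _ Badd Bcap]] := Jss hA JA (fun _ _ => I).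
have [a0 [b0 [Aa Bb e1]]] := proj2 (Badd 1) I.
exists a0; split=> // a Aa'.
apply/(Bcap (a - a * a0)); split.
  apply: li_sub => //; case: hA => _ _ M; exact: M.
have -> : a - a * a0 = a * b0 by rewrite -{1}[a]mulr1 e1 mulrDr addrAC subrr add0r.
by case: hB => _ _ M; apply: M.
Qed.

Lemma vnr x : exists r, eqJ x (x * r * x).
Proof.
pose A := fun y => exists r j, J j /\ y = r * x + j.
have hA : left_ideal A.
  split.
  - by exists 0, 0; split; [exact: J0 | rewrite mul0r addr0].
  - move=> y z [r1 [j1 [? ->]]] [r2 [j2 [? ->]]]; exists (r1 + r2), (j1 + j2).
    by split; [exact: JD | rewrite mulrDl addrACA].
  - move=> s y [r1 [j1 [? ->]]]; exists (s * r1), (s * j1).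
    by split; [exact: JM | rewrite mulrDr mulrA].
have JA : sub_set J A by move=> j Jj; exists 0, j; rewrite mul0r add0r.
have [e [[r [j [Jj ->]]] He]] := left_gen hA JA.
exists r.
have Ax : A x by exists 1, 0; split; [exact: J0 | rewrite mul1r addr0].
have := He x Ax; rewrite mulrDr mulrA => h; rewrite {1}h.
move/eqJ0: Jj => Jj; rewrite Jj mulr0 addr0; reflexivity.
Qed.

Lemma right_gen (I : T -> Prop) : (forall x y, I x -> I y -> I (x + y)) ->
  (forall x r, I x -> I (x * r)) -> sub_set J I ->
  exists e, [/\ I e, eqJ (e * e) e & forall x, I x -> eqJ x (e * x)].
Proof.
move=> ID IM JI.
have I0 : I 0 by apply: JI; exact: J0.
have IN : forall x, I x -> I (- x) by move=> x Ix; rewrite -mulrN1; apply: IM.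
pose P := fun A : T -> Prop => exists e, [/\ I e, eqJ (e * e) e &
                                   forall a, A a <-> eqJ a (a * e)].
have Ae_left : forall e (A : T -> Prop), (forall a, A a <-> eqJ a (a * e)) -> left_ideal A.
  move=> e A hA; split.
  - by apply/hA; rewrite mul0r.
  - by move=> x y /hA hx /hA hy; apply/hA; rewrite mulrDl -hx -hy.
  - by move=> r x /hA hx; apply/hA; rewrite -mulrA -hx.
have Ae_J : forall e (A : T -> Prop), (forall a, A a <-> eqJ a (a * e)) -> sub_set J A.
  move=> e A hA j Jj; apply/hA; move/eqJ0: (Jj) => ->; by rewrite mul0r.
have [|F FP Ftot [X FX]|A [[e [Ie ee hA]] Amax]] := @zorn_ne T P J.
- exists 0; split=> //; first by rewrite mul0r.
  by move=> a; rewrite mulr0 -eqJ0.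
- pose U := fun x => exists X, F X /\ X x.
  have hU : left_ideal U.
    split.
    + by exists X; split => //; have [e [_ _ h]] := FP _ FX; case: (Ae_left _ _ h).
    + move=> x y [X1 [F1 x1]] [X2 [F2 y2]].
      case: (Ftot _ _ F1 F2) => h.
      * exists X2; split => //; have [e [_ _ h2]] := FP _ F2.
        by case: (Ae_left _ _ h2) => _ D _; apply: D; auto.
      * exists X1; split => //; have [e [_ _ h2]] := FP _ F1.
        by case: (Ae_left _ _ h2) => _ D _; apply: D; auto.
    + move=> r x [X1 [F1 x1]]; exists X1; split=> //.
      by have [e [_ _ h2]] := FP _ F1; case: (Ae_left _ _ h2) => _ _ M; apply: M.
  have JU : sub_set J U.
    by move=> j Jj; exists X; split=> //; have [e [_ _ h]] := FP _ FX; exact: Ae_J h _ Jj.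
  have [u [[Y [FY Yu]] Hu]] := left_gen hU JU.
  have [e [Ie ee hY]] := FP _ FY.
  exists e; split=> // a; split.
    move=> Ua; have h1 := Hu a Ua; have /hY h2 := Yu.
    by rewrite h1 {1}h2 mulrA -h1.
  by move=> /hY Ya; exists Y.
have key : forall x, I x -> eqJ x (e * x).
  move=> x Ix.
  pose y := x - e * x.
  have Iy : I y by apply: ID => //; apply: IN; exact: IM.
  have ey : eqJ (e * y) 0.
    by rewrite /y mulrBr mulrA ee subrr.
  have [r hr] := vnr y.
  pose g := y * r.
  have Ig : I g by exact: IM.
  have eg : eqJ (e * g) 0 by rewrite /g mulrA ey mul0r.
  have gg : eqJ (g * g) g by rewrite /g mulrA -hr.
  have gy : eqJ (g * y) y by rewrite /g -hr.
  clearbody g.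
  pose f := e + g - g * e.
  have If : I f := ID _ _ (ID _ _ Ie Ig) (IN _ (IM _ _ Ig)).

  have fe : eqJ (f * e) e.
    by rewrite /f !mulrDl mulNr -mulrA ee addrK.
  have ef : eqJ (e * f) e.
    by rewrite /f !mulrDr mulrN mulrA eg mul0r addr0 subr0 ee.
  have ff : eqJ (f * f) f.
    rewrite {1}/f !mulrDl mulNr -mulrA ef /f !mulrDr mulrN gg mulrA gg.
    by rewrite [g * e + g]addrC addrK.
  pose Af := fun a => eqJ a (a * f).
  have PAf : P Af by exists f; split.
  have AAf : forall a, A a -> Af a.
    by move=> a /hA ha; rewrite /Af {2}ha -mulrA ef -ha.
  have Af_f : Af f by rewrite /Af ff.
  have /hA fe' := Amax _ PAf AAf f Af_f.
  have fee : eqJ f e by rewrite {1}fe' fe.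
  have fx : eqJ (f * x) x.
    have -> : x = y + e * x by rewrite /y subrK.
    rewrite mulrDr mulrA fe.
    by rewrite /f !mulrDl mulNr -mulrA ey gy mulr0 add0r subr0.
  by rewrite -{1}fx fee.
by exists e; split.
Qed.

End RSS.

Section Concrete.
Variable R : nzRingType.
Local Notation J := (@jacobson R).

Lemma jac_left : left_ideal J.
Proof.
split.
- by move=> M [[M0 _ _] _ _].
- by move=> x y hx hy M hM; case: (hM) => [[_ D _]] _ _; apply: D; [exact: hx | exact: hy].
- by move=> r x hx M hM; case: (hM) => [[_ _ Mm]] _ _; apply: Mm; exact: hx.
Qed.

Lemma pow_expr (A : R -> Prop) j m : A j -> set_pow A m (j ^+ m).
Proof.
move=> Aj; elim: m => [//|m IH] /=.
by rewrite exprSr; apply: set_mul1.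
Qed.

Lemma nil_inv (j : R) N : j ^+ N = 0 ->
  exists u, u * (1 - j) = 1 /\ (1 - j) * u = 1.
Proof.
move=> jN; exists (\sum_(i < N) j ^+ i).
have e1 : (1 - j) * \sum_(i < N) j ^+ i = 1.
  by rewrite -opprB mulNr -subrX1 jN sub0r opprK.
split=> //.
have c : GRing.comm j (\sum_(i < N) j ^+ i).
  by apply: commr_sum => i _; exact: commrX.
by rewrite mulrBr mulr1 -c -{1}[\sum_(i < N) j ^+ i]mul1r -mulrBl.
Qed.

End Concrete.

Lemma jac_unit_lemma (T : nzRingType) (a r u : T) :
  u * (1 - r * a) = 1 -> (1 + a * u * r) * (1 - a * r) = 1.
Proof.
move=> hu.
have h2 : r * (1 - a * r) = (1 - r * a) * r.
  by rewrite mulrBr mulrBl mulr1 mul1r mulrA.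
have h : a * u * r * (1 - a * r) = a * r.
  by rewrite -!mulrA h2 [u * _]mulrA hu mul1r.
by rewrite mulrDl mul1r h subrK.
Qed.

Section Concrete2.
Variable R : nzRingType.
Local Notation J := (@jacobson R).
Hypothesis hs : semiprimary R.

Lemma jac_inv j : J j -> exists u, u * (1 - j) = 1 /\ (1 - j) * u = 1.
Proof.
case: hs => [[n hn] _] Jj; apply: (@nil_inv _ j n); apply/(hn (j ^+ n)).
exact: pow_expr.
Qed.

Lemma jac_right x r : J x -> J (x * r).
Proof.
move=> Jx M hM; apply: contrapT => nM.
case: (hM) => hML nM1 Mmax.
pose I := fun y => exists m t, M m /\ y = m + t * (x * r).
have hI : left_ideal I.
  case: (hML) => M0 MD MM; split.
  - by exists 0, 0; split=> //; rewrite mul0r addr0.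
  - move=> y z [m1 [t1 [? ->]]] [m2 [t2 [? ->]]]; exists (m1 + m2), (t1 + t2).
    by split; [exact: MD | rewrite mulrDl addrACA].
  - move=> s y [m1 [t1 [? ->]]]; exists (s * m1), (s * t1).
    by split; [exact: MM | rewrite mulrDr mulrA].
have MI : sub_set M I by move=> y My; exists y, 0; split=> //; rewrite mul0r addr0.
have I1 : I 1.
  apply: contrapT => nI1; have e := Mmax I hI MI nI1.
  by apply: nM; apply/(e (x * r)); exists 0, 1; split; [case: hML | rewrite add0r mul1r].
case: I1 => m [t [Mm e]].
have Jy : J (r * (t * x)) by case: (jac_left R) => _ _ h; exact: (h r (t * x) (h t x Jx)).
have [u [hu _]] := jac_inv Jy.
have em : m = 1 - t * x * r by rewrite e -mulrA addrK.
apply: nM1; have := jac_unit_lemma hu; rewrite -em => <-.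
by case: hML => _ _ MM; apply: MM.
Qed.

End Concrete2.

Lemma set_mul_c (T : nzRingType) (A B : T -> Prop) x :
  set_mul (R:=T^c) A B x <-> set_mul B A x.
Proof.
split; move: x.
  apply: (@set_mul_min T^c A B (fun x => set_mul (R:=T) B A x)); [exact: (@set_mul0 T B A) | move=> u v; exact: (@set_mulD T B A u v) |].
  by move=> a b Aa Bb; exact: (@set_mul1 T B A b a).
apply: (@set_mul_min T B A (fun x => set_mul (R:=T^c) A B x)); [exact: (@set_mul0 T^c A B) | move=> u v; exact: (@set_mulD T^c A B u v) |].
by move=> a b Aa Bb; exact: (@set_mul1 T^c A B b a).
Qed.

Section Conv.
Variable T : nzRingType.
Variable J : T -> Prop.
Hypothesis JL : left_ideal J.
Hypothesis JR : forall x r, J x -> J (x * r).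

Lemma comm_pow m x : set_mul J (set_pow J m) x <-> set_pow J m.+1 x.
Proof.
split.
  move: x; apply: set_mul_min; [exact: pow0 | exact: powD |].
  by move=> a b Ja hb; exact: mulJpow.
elim: m x => [|m IH] x /=.
  move: x; apply: set_mul_min; [exact: set_mul0 | exact: set_mulD |].
  move=> a b _ Jb; rewrite -[a * b]mulr1; apply: set_mul1 => //.
  by case: JL => _ _ h; apply: h.
move: x; apply: set_mul_min; [exact: set_mul0 | exact: set_mulD |].
move=> a b ha Jb; apply: set_mulA.
by apply: set_mul1 => //; apply/IH.
Qed.

Lemma pow_c m x : set_pow (R:=T^c) J m x <-> set_pow J m x.
Proof.
elim: m x => [//|m IH] x /=.
rewrite set_mul_c; split => h.
  apply/comm_pow; move: h; apply: set_mul_mono => // y; exact: (proj1 (IH y)).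
move/comm_pow: h; apply: set_mul_mono => // y; exact: (proj2 (IH y)).
Qed.

End Conv.

Theorem lemma1p1 (R : nzRingType) (l : nat) :
  semiprimary R -> loewy_length R l ->
  (rigid R <->
   forall i : nat, (1 <= i <= l)%N ->
     set_eq (fun x : R => forall y, set_pow (@jacobson R) (l - i) y -> y * x = 0)
            (set_pow (@jacobson R) i) /\
     set_eq (set_pow (@jacobson R) i)
            (fun x : R => forall y, set_pow (@jacobson R) (l - i) y -> x * y = 0)).
Proof.
move=> hs [Jnil Jmin].
set J := @jacobson R.
have JL : left_ideal J := jac_left R.
have JR : forall x r, J x -> J (x * r) := jac_right hs.
have Jinv : forall j, J j -> exists u, u * (1 - j) = 1.
  by move=> j /(jac_inv hs) [u [h _]]; exists u.
have Jss : semisimple_subquot J (@full_set R) := hs.2.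
have left := gen_main JL JR Jinv Jss Jnil Jmin.
have JLc : left_ideal (R:=R^c) J.
  split; first by case: JL.
    by case: JL => _ h _; exact: h.
  by move=> r x Jx; exact: JR.
have JRc : forall x r : R^c, J x -> J (x * r).
  by move=> x r Jx; case: JL => _ _ h; exact: h.
have Jinvc : forall j : R^c, J j -> exists u : R^c, u * (1 - j) = 1.
  by move=> j /(jac_inv hs) [u [_ h]]; exists u.
have Jssc : semisimple_subquot (R:=R^c) J (@full_set R^c).
  move=> K hK JK _.
  have KD : forall x y : R, K x -> K y -> K (x + y) by case: hK.
  have KM : forall (x r : R), K x -> K (x * r) by case: hK => _ _ h x r; exact: h.
  have [e [Ke ee key]] := right_gen JL JR Jss KD KM JK.
  pose C := fun c : R => J (e * c).
  exists C; split.
  - split.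
    + by rewrite /C mulr0; case: JL.
    + by move=> x y hx hy; rewrite /C mulrDr; case: JL => _ h _; exact: h.
    + by move=> r x hx; have := JR _ r hx; rewrite -mulrA.
  - by move=> x Jx; rewrite /C; case: JL => _ _ h; exact: h.
  - by [].
  - move=> y; split=> // _.
    exists (e * y), (y - e * y); split.
    + exact: KM.
    + rewrite /C mulrBr mulrA.
      have -> : e * y - e * e * y = - ((e * e - e) * y) by rewrite mulrBl opprB.
      exact: (li_opp JL (JR _ y ee)).
    + by rewrite addrC subrK.
  - move=> x; split.
      case=> Kx Cx; have := key x Kx; rewrite /eqJ => h.
      by rewrite -(subrK (e * x) x); case: JL => _ D _; exact: D.
    by move=> Jx; split; [exact: JK | rewrite /C; case: JL => _ _ h; exact: h].
have pc := pow_c JL JR.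
have Jnilc : set_eq (set_pow (R:=R^c) J l) (@zero_set R^c).
  by move=> x; split => [/pc/(Jnil x) | /(Jnil x)/pc].
have Jminc : forall k, (k < l)%N -> ~ set_eq (set_pow (R:=R^c) J k) (@zero_set R^c).
  move=> k lt_kl h; apply: (Jmin k lt_kl) => x.
  by split => [/pc/(h x) | /(h x)/pc].
have right := gen_main JLc JRc Jinvc Jssc Jnilc Jminc.
rewrite /rigid left right; split.
  move=> [h1 h2] i hi; split; first exact: h1.
  move=> x; have e := h2 i hi x; split.
    move=> hx y hy; exact: ((proj2 e) ((proj2 (pc i x)) hx) y ((proj2 (pc _ y)) hy)).
  move=> H; apply/(pc i x); apply: (proj1 e) => y hy; exact: (H y ((proj1 (pc _ y)) hy)).
move=> h; split=> i hi; first by case: (h i hi).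
move=> x; case: (h i hi) => _ /(_ x) e; split.
  move=> H; apply/(pc i x); apply: (proj2 e) => y hy; exact: (H y ((proj2 (pc _ y)) hy)).
move=> hx y hy; exact: ((proj1 e) ((proj1 (pc i x)) hx) y ((proj1 (pc _ y)) hy)).
Qed.
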